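(* Let $\varepsilon=4\cdot(0.33)^3$. Then $$\varepsilon\, n^{-4}\cdot \max_{S\in\mathcal{S}_{2n}}F(S)\ \le\ \max_{\omega\in\mathbb{R}^{2n},\|\omega\|_2=1}\ \min_{\pi\in\Gamma_n}\sum_{i,j}\pi_{i,j}(M_{i,j}^{\top}\omega)^2\ \le\ \max_{S\in\mathcal{S}_{2n}}F(S).$$
   Context: Setting: $\mathcal{B}\subseteq\mathbb{R}^d$, $K$ a symmetric positive definite kernel on $\mathcal{B}$, points $x_1,\dots,x_n,y_1,\dots,y_n\in\mathcal{B}$. $G=\begin{pmatrix}K(x^n,x^n)&-K(x^n,y^n)\\-K(y^n,x^n)&K(y^n,y^n)\end{pmatrix}$ (with $K(x^n,y^n)=(K(x_i,y_j))_{i,j}$ etc.) is assumed positive definite, $G^{-1}=UU^{\top}$ is its Cholesky decomposition; $M'_{i,j}\in\mathbb{R}^{2n}$ has first $n$ entries $(K(x_i,x_l)-K(y_j,x_l))_{l\in[n]}$ and last $n$ entries $(K(y_j,y_l)-K(x_i,y_l))_{l\in[n]}$; $M_{i,j}=U^{\top}M'_{i,j}$. $\Gamma_n=\{\pi\in\mathbb{R}_+^{n\times n}:$ all row and column sums $1/n\}$, $\langle A,B\rangle=\mathrm{Trace}(A^{\top}B)$, $F(S)=\min_{\pi\in\Gamma_n}\sum_{i,j}\pi_{i,j}\langle M_{i,j}M_{i,j}^{\top},S\rangle$, $\mathcal{S}_{2n}=\{S\in\mathbb{S}^{2n}_+:\mathrm{Trace}(S)=1\}$. The middle quantity equals $\mathcal{KMS}_2(\widehat\mu_n,\widehat\nu_n)^2$,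 where $\widehat\mu_n=\frac1n\sum_i\delta_{x_i}$, $\widehat\nu_n=\frac1n\sum_i\delta_{y_i}$ and $\mathcal{KMS}_2(\mu,\nu)=\sup_{f\in\mathcal{H},\|f\|_{\mathcal{H}}\le1}W_2(f_{\#}\mu,f_{\#}\nu)$ with $\mathcal{H}$ the RKHS of $K$. *)

(* Defs.v *)
From HB Require Import structures.
From mathcomp Require Import all_boot all_order all_algebra.
From mathcomp Require Import classical_sets reals.
Unset Printing Implicit Defensive.
Import Order.TTheory GRing.Theory Num.Theory.
Local Open Scope ring_scope.
Local Open Scope classical_set_scope.

Definition kernel_symmetric {R : realType} {d : nat} (B : set 'rV[R]_d)
  (K : 'rV[R]_d -> 'rV[R]_d -> R) : Prop :=
  forall u v, B u -> B v -> K u v = K v u.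

(* positive definite kernel (in the RKHS sense): every Gram matrix on points
   of B is positive semidefinite *)
Definition kernel_posdef {R : realType} {d : nat} (B : set 'rV[R]_d)
  (K : 'rV[R]_d -> 'rV[R]_d -> R) : Prop :=
  forall (m : nat) (z : 'I_m -> 'rV[R]_d) (c : 'I_m -> R),
    (forall i, B (z i)) -> 0 <= \sum_(i < m) \sum_(j < m) c i * c j * K (z i) (z j).

Definition mx_posdef {R : realType} {m : nat} (A : 'M[R]_m) : Prop :=
  A^T = A /\ forall v : 'cV[R]_m, v != 0 -> 0 < (v^T *m A *m v) 0 0.

Definition mx_psd {R : realType} {m : nat} (A : 'M[R]_m) : Prop :=
  A^T = A /\ forall v : 'cV[R]_m, 0 <= (v^T *m A *m v) 0 0.

Definition cholesky_factor {R : realType} {m : nat} (A U : 'M[R]_m) : Prop :=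
  is_trig_mx U /\ (forall i, 0 < U i i) /\ A = U *m U^T.

Definition Gmx {R : realType} {d n : nat} (K : 'rV[R]_d -> 'rV[R]_d -> R)
  (x y : 'I_n -> 'rV[R]_d) : 'M[R]_(n + n) :=
  block_mx (\matrix_(i, l) K (x i) (x l)) (\matrix_(i, l) - K (x i) (y l))
           (\matrix_(i, l) - K (y i) (x l)) (\matrix_(i, l) K (y i) (y l)).

Definition Mprime {R : realType} {d n : nat} (K : 'rV[R]_d -> 'rV[R]_d -> R)
  (x y : 'I_n -> 'rV[R]_d) (i j : 'I_n) : 'cV[R]_(n + n) :=
  col_mx (\col_l (K (x i) (x l) - K (y j) (x l)))
         (\col_l (K (y j) (y l) - K (x i) (y l))).

Definition Mij {R : realType} {d n : nat} (U : 'M[R]_(n + n))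
  (K : 'rV[R]_d -> 'rV[R]_d -> R) (x y : 'I_n -> 'rV[R]_d) (i j : 'I_n)
  : 'cV[R]_(n + n) := U^T *m Mprime K x y i j.

Definition Gamma_n {R : realType} (n : nat) : set 'M[R]_n :=
  [set pi | (forall i j, 0 <= pi i j) /\
            (forall i, \sum_(j < n) pi i j = n%:R^-1) /\
            (forall j, \sum_(i < n) pi i j = n%:R^-1)].

Definition frob {R : realType} {m : nat} (A B : 'M[R]_m) : R := \tr (A^T *m B).

Definition Fobj {R : realType} {n : nat} (M : 'I_n -> 'I_n -> 'cV[R]_(n + n))
  (S : 'M[R]_(n + n)) : R :=
  inf [set r | exists2 pi, Gamma_n n pi &
        r = \sum_(i < n) \sum_(j < n) pi i j * frob (M i j *m (M i j)^T) S].

Definition spectraplex {R : realType} (m : nat) : set 'M[R]_m :=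
  [set S | mx_psd S /\ \tr S = 1].

Definition maxF {R : realType} {n : nat} (M : 'I_n -> 'I_n -> 'cV[R]_(n + n)) : R :=
  sup [set r | exists2 S, spectraplex (n + n) S & r = Fobj M S].

Definition maxmin_omega {R : realType} {n : nat}
  (M : 'I_n -> 'I_n -> 'cV[R]_(n + n)) : R :=
  sup [set r | exists2 w : 'cV[R]_(n + n), \sum_k w k 0 ^+ 2 = 1 &
        r = inf [set t | exists2 pi, Gamma_n n pi &
                   t = \sum_(i < n) \sum_(j < n) pi i j * ((M i j)^T *m w) 0 0 ^+ 2]].

(* Main.v *)
Require Import Defs.
From HB Require Import structures.
From mathcomp Require Import all_boot all_order all_algebra.
From mathcomp Require Import classical_sets reals.
From mathcomp Require Import ring lra.
Set Implicit Arguments. Unset Strict Implicit.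
Import Order.TTheory GRing.Theory Num.Theory.
Local Open Scope ring_scope.

Section BF.
Variables (R : realType) (m : nat) (S : 'M[R]_m).

Definition bf (u w : 'cV[R]_m) : R := (u^T *m S *m w) 0 0.

Lemma bfDr u w1 w2 : bf u (w1 + w2) = bf u w1 + bf u w2.
Proof. by rewrite /bf mulmxDr mxE. Qed.
Lemma bfZr u a w : bf u (a *: w) = a * bf u w.
Proof. by rewrite /bf -scalemxAr mxE. Qed.
Lemma bfDl u1 u2 w : bf (u1 + u2) w = bf u1 w + bf u2 w.
Proof. by rewrite /bf raddfD /= !mulmxDl mxE. Qed.
Lemma bfZl a u w : bf (a *: u) w = a * bf u w.
Proof. by rewrite /bf linearZ /= -!scalemxAl mxE. Qed.
Lemma bf0r u : bf u 0 = 0.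
Proof. by rewrite /bf mulmx0 mxE. Qed.
Lemma bf_sumr (I : finType) u (f : I -> 'cV_m) :
  bf u (\sum_k f k) = \sum_k bf u (f k).
Proof.
symmetry; apply: (big_rec2 (fun a b => a = bf u b)) => [|k a b _ ->].
  by rewrite bf0r.
by rewrite bfDr.
Qed.
Lemma bf_sym u w : S^T = S -> bf u w = bf w u.
Proof.
move=> HS; rewrite /bf.
have -> : (u^T *m S *m w) 0 0 = (u^T *m S *m w)^T 0 0 by rewrite [RHS]mxE.
by rewrite !trmx_mul trmxK HS mulmxA.
Qed.
End BF.

Lemma quad_disc (R : realType) (A B C : R) :
  (forall t, 0 <= A + 2 * t * B + t ^+ 2 * C) -> B ^+ 2 <= A * C.
Proof.
move=> H.
have HC : 0 <= C.
  case: (lerP 0 C) => // HC; exfalso.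
  set t := Num.sqrt ((`|A| + 1) / (- C)).
  have t2 : t ^+ 2 * C = - (`|A| + 1).
    rewrite sqr_sqrtr; last by apply: divr_ge0; [rewrite addr_ge0 | rewrite oppr_ge0 ltW].
    by field; rewrite lt_eqF.
  have h1 := H t; have h2 := H (- t).
  have : 0 <= A + t ^+ 2 * C by nra.
  rewrite t2; have := ler_norm A; nra.
case: (ltrP 0 C) => HC'.
  have := H (- B / C).
  have -> : A + 2 * (- B / C) * B + (- B / C) ^+ 2 * C = A - B ^+ 2 / C.
    by field; rewrite gt_eqF.
  rewrite subr_ge0 ler_pdivrMr //.
have C0 : C = 0 by apply/eqP; rewrite eq_le HC HC'.
rewrite C0 mulr0.
case: (eqVneq B 0) => [->|BN]; first by rewrite expr0n.
exfalso; have := H (- (A + 1) / (2 * B)).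
have -> : A + 2 * (- (A + 1) / (2 * B)) * B + (- (A + 1) / (2 * B)) ^+ 2 * C = -1.
  by rewrite C0; field.
by rewrite ler0N1.
Qed.

Lemma bf_CS (R : realType) m (S : 'M[R]_m) u w :
  S^T = S -> (forall v, 0 <= bf S v v) -> bf S u w ^+ 2 <= bf S u u * bf S w w.
Proof.
move=> Hs Hp; apply: quad_disc => t.
have := Hp (u + t *: w).
rewrite !(bfDl, bfDr, bfZl, bfZr) (bf_sym w u Hs).
suff -> : bf S u u + t * bf S u w + (t * bf S u w + t * (t * bf S w w)) =
  bf S u u + 2 * t * bf S u w + t ^+ 2 * bf S w w by [].
ring.
Qed.
Section Bang.
Variables (R : realType) (m : nat) (S : 'M[R]_m) (I : finType) (mm : I -> 'cV[R]_m).
Hypothesis HS : S^T = S.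
Hypothesis Hp : forall v, 0 <= bf S v v.
Hypothesis Htr : \tr S = 1.

Let a k := bf S (mm k) (mm k).
Let c k := (Num.sqrt (a k))^-1.
Definition sgb (b : bool) : R := if b then 1 else -1.
Let vs (s : {ffun I -> bool}) := \sum_k (sgb (s k) * c k) *: mm k.
Let Q s := bf S (vs s) (vs s).
Let flipf (s : {ffun I -> bool}) j := [ffun k => if k == j then ~~ s k else s k].

Lemma bf_suml (f : I -> 'cV_m) w : bf S (\sum_k f k) w = \sum_k bf S (f k) w.
Proof.
rewrite bf_sym // bf_sumr; apply: eq_bigr => k _; exact: bf_sym.
Qed.

Lemma flipE s j : vs (flipf s j) = vs s - (2 * sgb (s j) * c j) *: mm j.
Proof.
rewrite /vs (bigD1 j) //= [in RHS](bigD1 j) //= ffunE eqxx.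
have -> : \sum_(k | k != j) (sgb (flipf s j k) * c k) *: mm k =
          \sum_(k | k != j) (sgb (s k) * c k) *: mm k.
  by apply: eq_bigr => k /negbTE kj; rewrite ffunE kj.
rewrite addrAC -scalerBl; congr (_ *: _ + _).
by case: (s j) => /=; ring.
Qed.

Lemma bf_quad v t w : bf S (v - t *: w) (v - t *: w) =
  bf S v v - 2 * t * bf S w v + t ^+ 2 * bf S w w.
Proof.
rewrite -scaleNr !(bfDl, bfDr, bfZl, bfZr) (bf_sym v w HS); ring.
Qed.

Lemma c_ge0 k : 0 <= c k.
Proof. by rewrite /c invr_ge0 sqrtr_ge0. Qed.

Lemma csa k : 0 <= c k * Num.sqrt (a k) <= 1.
Proof.
rewrite mulr_ge0 ?c_ge0 ?sqrtr_ge0 //=.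
case: (eqVneq (Num.sqrt (a k)) 0) => [->|H]; first by rewrite mulr0.
by rewrite /c mulVf.
Qed.

Lemma sgb2 b : sgb b ^+ 2 = 1.
Proof. by case: b => /=; rewrite ?sqrrN expr1n. Qed.

Lemma sgb_norm b : `|sgb b| = 1.
Proof. by case: b => /=; rewrite ?normrN normr1. Qed.

Lemma max_prop s : (forall s', Q s' <= Q s) ->
  forall j, a j <= bf S (mm j) (vs s) ^+ 2.
Proof.
move=> Hmax j.
have := Hmax (flipf s j); rewrite /Q flipE bf_quad -/(a j).
set B := bf S (mm j) (vs s); set sg := sgb (s j).
move=> H.
have H1 : c j ^+ 2 * a j <= sg * c j * B.
  have E : (2 * sg * c j) ^+ 2 = 4 * sg ^+ 2 * c j ^+ 2 by ring.
  rewrite E /sg sgb2 -/sg in H; nra.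
have ha : 0 <= a j by apply: Hp.
case: (eqVneq (a j) 0) => [->|anz]; first by rewrite sqr_ge0.
have apos : 0 < a j by rewrite lt_def anz.
have sapos : 0 < Num.sqrt (a j) by rewrite sqrtr_gt0.
have sa2 : Num.sqrt (a j) ^+ 2 = a j by rewrite sqr_sqrtr.
have cs : c j * Num.sqrt (a j) = 1 by rewrite /c mulVf // gt_eqF.
have H2 : 1 <= sg * c j * B.
  by move: H1; rewrite -sa2 -exprMn cs expr1n.
have H3 : Num.sqrt (a j) <= sg * B.
  have : Num.sqrt (a j) * 1 <= Num.sqrt (a j) * (sg * c j * B) by rewrite ler_pM2l.
  have -> : Num.sqrt (a j) * (sg * c j * B) = sg * B * (c j * Num.sqrt (a j)) by ring.
  by rewrite cs !mulr1.
have sg2 : sg ^+ 2 = 1 by rewrite sgb2.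
rewrite -sa2; have -> : B ^+ 2 = (sg * B) ^+ 2 by rewrite exprMn sg2 mul1r.
have h0 : 0 <= sg * B by exact: (le_trans (ltW sapos) H3).
by rewrite ler_sqr // ?nnegrE ?ltW.
Qed.

Lemma Q_bound s : Q s <= #|I|%:R ^+ 2.
Proof.
rewrite /Q /vs bf_sumr.
have -> : (#|I|%:R ^+ 2 : R) = \sum_(k : I) \sum_(j : I) (1 : R).
  by rewrite !sumr_const -mulr_natl mulr1 expr2 mulr_natr.
apply: ler_sum => k _; rewrite bfZr bf_suml mulr_sumr.
apply: ler_sum => j _; rewrite bfZl.
set b := bf S (mm j) (mm k).
have hb : b ^+ 2 <= a j * a k by apply: bf_CS.
have hja := Hp (mm j); have hka := Hp (mm k).
have hb' : `|b| <= Num.sqrt (a j) * Num.sqrt (a k).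
  have p0 : 0 <= Num.sqrt (a j) * Num.sqrt (a k) by rewrite mulr_ge0 ?sqrtr_ge0.
  have p2 : (Num.sqrt (a j) * Num.sqrt (a k)) ^+ 2 = a j * a k.
    by rewrite exprMn !sqr_sqrtr.
  have nb : `|b| ^+ 2 = b ^+ 2 by rewrite real_normK // num_real.
  have := normr_ge0 b; nra.
have := csa j; have := csa k; have := c_ge0 j; have := c_ge0 k.
set cj := c j; set ck := c k; set sj := Num.sqrt (a j); set sk := Num.sqrt (a k).
move=> c0k c0j /andP [h1 h2] /andP [h3 h4].
apply: (le_trans (ler_norm _)).
rewrite !normrM !sgb_norm !mul1r (ger0_norm c0k) (ger0_norm c0j).
have : ck * (cj * `|b|) <= ck * (cj * (sj * sk)).
  by apply: ler_wpM2l => //; apply: ler_wpM2l.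
have : ck * (cj * (sj * sk)) = (cj * sj) * (ck * sk) by ring.
move=> -> Hle; apply: (le_trans Hle).
by rewrite -[1]mulr1 ler_pM.
Qed.

Lemma Sv_entry v i : (S *m v) i 0 = bf S (delta_mx i 0) v.
Proof. by rewrite /bf trmx_delta -mulmxA -rowE [RHS]mxE. Qed.

Lemma Sdiag i : bf S (delta_mx i 0) (delta_mx i 0) = S i i.
Proof. by rewrite /bf trmx_delta -rowE -colE !mxE. Qed.

Lemma Sv_norm v : \sum_i (S *m v) i 0 ^+ 2 <= bf S v v.
Proof.
have -> : bf S v v = \sum_i S i i * bf S v v.
  by rewrite -mulr_suml -[\sum_i S i i]/(\tr S) Htr mul1r.
apply: ler_sum => i _; rewrite Sv_entry -Sdiag; exact: bf_CS.
Qed.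

Lemma bang : (0 < m)%N -> exists w : 'cV[R]_m, \sum_k w k 0 ^+ 2 = 1 /\
  forall j, a j <= #|I|%:R ^+ 2 * ((mm j)^T *m w) 0 0 ^+ 2.
Proof.
move=> m0.
pose s0 : {ffun I -> bool} := [ffun => true].
pose s := [arg max_(s > s0) Q s]%O.
have Hmax : forall s', Q s' <= Q s.
  rewrite /s; case: (@arg_maxP _ _ _ s0 predT Q) => // x _ H s'; exact: H.
have Hj := max_prop Hmax.
set v := vs s in Hj.
pose w0 := S *m v.
have Ew0 : forall j, ((mm j)^T *m w0) 0 0 = bf S (mm j) v.
  by move=> j; rewrite /w0 /bf mulmxA.
set D := \sum_i w0 i 0 ^+ 2.
have D0 : 0 <= D by apply: sumr_ge0 => i _; exact: sqr_ge0.
have DQ : D <= #|I|%:R ^+ 2 by apply: (le_trans (Sv_norm v)); exact: Q_bound.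
case: (eqVneq D 0) => [Dz|Dnz].
  pose e0 : 'cV[R]_m := delta_mx (Ordinal m0) 0.
  exists e0; split.
    rewrite (bigD1 (Ordinal m0)) //= big1 => [|i ni].
      by rewrite !mxE !eqxx /= expr1n addr0.
    by rewrite mxE (negbTE ni) /= expr0n.
  move=> j; apply: (le_trans (Hj j)).
  have wz : w0 = 0.
    apply/matrixP => i l; rewrite (ord1 l) [RHS]mxE.
    have := psumr_eq0P (fun i _ => sqr_ge0 (w0 i 0)) Dz (i := i) isT.
    by move/eqP; rewrite sqrf_eq0 => /eqP.
  rewrite -Ew0 wz mulmx0 mxE expr2 mul0r.
  by apply: mulr_ge0; exact: sqr_ge0.
have Dpos : 0 < D by rewrite lt_def Dnz D0.
have sD : 0 < Num.sqrt D by rewrite sqrtr_gt0.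
exists ((Num.sqrt D)^-1 *: w0); split.
  under eq_bigr => i _ do rewrite mxE exprMn.
  by rewrite -mulr_sumr -/D exprVn sqr_sqrtr ?mulVf.
move=> j; apply: (le_trans (Hj j)).
rewrite -scalemxAr mxE Ew0 exprMn exprVn sqr_sqrtr //.
set B := bf S (mm j) v.
have B0 := sqr_ge0 B.
rewrite mulrA; rewrite -[B ^+ 2 in X in X <= _]mul1r ler_wpM2r //.
by rewrite ler_pdivlMr // mul1r.
Qed.
End Bang.
Local Open Scope classical_set_scope.

Section Glue.
Variable R : realType.

Lemma tr1 (X : 'M[R]_1) : \tr X = X 0 0.
Proof. by rewrite /mxtrace big_ord1. Qed.

Lemma frob_bf m (a : 'cV[R]_m) (S : 'M[R]_m) : frob (a *m a^T) S = bf S a a.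
Proof.
by rewrite /frob trmx_mul trmxK -mulmxA mxtrace_mulC tr1.
Qed.

Lemma bf_ww m (w a : 'cV[R]_m) : bf (w *m w^T) a a = ((a^T *m w) 0 0) ^+ 2.
Proof.
rewrite /bf mulmxA -mulmxA.
have -> : w^T *m a = (a^T *m w)^T by rewrite trmx_mul trmxK.
by rewrite mxE big_ord1 [(_^T) 0 0]mxE expr2.
Qed.

Lemma spec_ww m (w : 'cV[R]_m) : \sum_k w k 0 ^+ 2 = 1 -> spectraplex m (w *m w^T).
Proof.
move=> H; split; first split.
- by rewrite trmx_mul trmxK.
- by move=> v; rewrite -/(bf _ v v) bf_ww sqr_ge0.
rewrite mxtrace_mulC tr1 mxE -H; apply: eq_bigr => k _; by rewrite mxE expr2.
Qed.

Lemma Sentry m (S : 'M[R]_m) k l : bf S (delta_mx k 0) (delta_mx l 0) = S k l.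
Proof. by rewrite /bf trmx_delta -rowE -colE !mxE. Qed.

Lemma bf_le m (S : 'M[R]_m) (a : 'cV[R]_m) : spectraplex m S ->
  bf S a a <= \sum_l \sum_k `|a k 0| * `|a l 0|.
Proof.
move=> [[HS Hp] Htr].
have Hd : forall k, 0 <= S k k <= 1.
  move=> k; rewrite -Sentry Hp /= Sentry -Htr /mxtrace (bigD1 k) //= lerDl.
  by apply: sumr_ge0 => i _; rewrite -Sentry Hp.
have Hkl : forall k l, `|S k l| <= 1.
  move=> k l; have := bf_CS (delta_mx k 0) (delta_mx l 0) HS Hp.
  rewrite !Sentry => h.
  have /andP [h1 h2] := Hd k; have /andP [h3 h4] := Hd l.
  have nb : `|S k l| ^+ 2 = S k l ^+ 2 by rewrite real_normK // num_real.
  have h5 : S k k * S l l <= 1 by rewrite -[1]mulr1 ler_pM.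
  have := normr_ge0 (S k l); nra.
rewrite /bf mxE; apply: ler_sum => l _; rewrite mxE mulr_suml; apply: ler_sum => k _.
rewrite mxE; apply: (le_trans (ler_norm _)); rewrite !normrM.
rewrite mulrAC; apply: ler_piMr; [by rewrite mulr_ge0 | exact: Hkl].
Qed.

Variables (n : nat) (M : 'I_n -> 'I_n -> 'cV[R]_(n + n)).
Hypothesis n0 : (0 < n)%N.

Definition piu : 'M[R]_n := \matrix_(i, j) (n%:R ^+ 2)^-1.

Lemma piuG : Gamma_n n piu.
Proof.
have nz : (n%:R : R) != 0 by rewrite pnatr_eq0 -lt0n.
have E : \sum_(j < n) (n%:R ^+ 2 : R)^-1 = n%:R^-1.
  by rewrite sumr_const card_ord -mulr_natl; field.
split; [|split] => *; rewrite ?mxE ?invr_ge0 ?exprn_ge0 ?ler0n //.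
  by under eq_bigr => j _ do rewrite mxE.
by under eq_bigr => j _ do rewrite mxE.
Qed.

Lemma Fobj_lb S : spectraplex (n + n) S ->
  0 <= Fobj M S /\ forall pi, Gamma_n n pi ->
    Fobj M S <= \sum_i \sum_j pi i j * bf S (M i j) (M i j).
Proof.
move=> [[HS Hp] Htr].
rewrite /Fobj.
set E := [set r | _].
have lb : lbound E 0.
  move=> r [pi [Hpi _] ->]; apply: sumr_ge0 => i _; apply: sumr_ge0 => j _.
  by rewrite mulr_ge0 // frob_bf Hp.
have ne : E !=set0 by exists (\sum_i \sum_j piu i j * frob (M i j *m (M i j)^T) S);
  exists piu; [exact: piuG|].
split; first exact: lb_le_inf.
move=> pi Hpi.
have -> : \sum_i \sum_j pi i j * bf S (M i j) (M i j) =
          \sum_i \sum_j pi i j * frob (M i j *m (M i j)^T) S.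
  by apply: eq_bigr => i _; apply: eq_bigr => j _; rewrite frob_bf.
apply: (ge_inf (ex_intro _ 0 lb)); by exists pi.
Qed.

Definition Cst : R := \sum_i \sum_j (n%:R ^+ 2)^-1 *
  \sum_l \sum_k `|M i j k 0| * `|M i j l 0|.

Lemma Fobj_ub S : spectraplex (n + n) S -> Fobj M S <= Cst.
Proof.
move=> HS; have [_ H] := Fobj_lb HS.
apply: (le_trans (H _ piuG)); apply: ler_sum => i _; apply: ler_sum => j _.
rewrite mxE; apply: ler_wpM2l; first by rewrite invr_ge0 exprn_ge0 ?ler0n.
exact: bf_le.
Qed.

Lemma inner_eq (w : 'cV[R]_(n + n)) :
  inf [set t | exists2 pi, Gamma_n n pi &
     t = \sum_(i < n) \sum_(j < n) pi i j * ((M i j)^T *m w) 0 0 ^+ 2]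
  = Fobj M (w *m w^T).
Proof.
rewrite /Fobj; congr inf; apply/seteqP; split => t [pi Hpi ->]; exists pi => //;
  apply: eq_bigr => i _; apply: eq_bigr => j _; by rewrite frob_bf bf_ww.
Qed.

End Glue.

Lemma main_gen (R : realType) (n : nat) (M : 'I_n -> 'I_n -> 'cV[R]_(n + n)) :
  (0 < n)%N ->
  (4 * (33 / 100) ^+ 3) * n%:R ^- 4 * maxF M <= maxmin_omega M /\
  maxmin_omega M <= maxF M.
Proof.
move=> n0.
have nn0 : (0 < n + n)%N by rewrite addn_gt0 n0.
pose e0 : 'cV[R]_(n + n) := delta_mx (Ordinal nn0) 0.
have e0u : \sum_k e0 k 0 ^+ 2 = 1.
  rewrite (bigD1 (Ordinal nn0)) //= big1 => [|i ni].
    by rewrite !mxE !eqxx /= expr1n addr0.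
  by rewrite mxE (negbTE ni) /= expr0n.
set B := [set r | exists2 S, spectraplex (n + n) S & r = Fobj M S].
set A := [set r | exists2 w : 'cV[R]_(n + n), \sum_k w k 0 ^+ 2 = 1 &
        r = inf [set t | exists2 pi, Gamma_n n pi &
                   t = \sum_(i < n) \sum_(j < n) pi i j * ((M i j)^T *m w) 0 0 ^+ 2]].
have AB : forall r, A r -> B r.
  move=> r [w wu ->]; rewrite inner_eq; exists (w *m w^T) => //; exact: spec_ww.
have Bne : B !=set0 by exists (inf [set t | exists2 pi, Gamma_n n pi &
                   t = \sum_(i < n) \sum_(j < n) pi i j * ((M i j)^T *m e0) 0 0 ^+ 2]);
  apply: AB; exists e0.
have Ane : A !=set0 by exists (inf [set t | exists2 pi, Gamma_n n pi &
                   t = \sum_(i < n) \sum_(j < n) pi i j * ((M i j)^T *m e0) 0 0 ^+ 2]);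
  exists e0.
have Bub : ubound B (Cst M) by move=> r [S HS ->]; exact: Fobj_ub.
have Bsup : has_sup B by split => //; exists (Cst M).
have Asup : has_sup A by split => //; exists (Cst M) => r /AB; exact: Bub.
split; last first.
  rewrite /maxmin_omega /maxF -/A -/B; apply: ge_sup => // r /AB Br.
  exact: sup_upper_bound.
rewrite /maxmin_omega /maxF -/A -/B.
have npos : (0 : R) < n%:R ^+ 4 by rewrite exprn_gt0 // ltr0n.
have cpos : (0 : R) < 4 * (33 / 100) ^+ 3 * n%:R ^- 4.
  apply: mulr_gt0; last by rewrite invr_gt0.
  by apply: mulr_gt0 => //; apply: exprn_gt0; lra.
rewrite mulrC -ler_pdivlMr //; apply: ge_sup => // r [S HS ->].
rewrite ler_pdivlMr // mulrC.
have [F0 Fle] := Fobj_lb M n0 HS.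
have [[Ssym Sp] Str] := HS.
have [w [wu Hw]] := @bang _ _ _ _ (fun p : 'I_n * 'I_n => M p.1 p.2) Ssym Sp Str nn0.
have card : (#|{: 'I_n * 'I_n}|%:R ^+ 2 : R) = n%:R ^+ 4.
  by rewrite card_prod card_ord natrM; ring.
rewrite card in Hw.
have key : n%:R ^- 4 * Fobj M S <=
    inf [set t | exists2 pi, Gamma_n n pi &
      t = \sum_(i < n) \sum_(j < n) pi i j * ((M i j)^T *m w) 0 0 ^+ 2].
  apply: lb_le_inf; first by exists (\sum_(i < n) \sum_(j < n) piu R n i j *
    ((M i j)^T *m w) 0 0 ^+ 2); exists (piu R n) => //; exact: piuG.
  move=> t [pi Hpi ->].
  have [pi0 _] := Hpi.
  apply: (le_trans (ler_wpM2l _ (Fle pi Hpi))); first by rewrite invr_ge0 ltW.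
  rewrite mulr_sumr; apply: ler_sum => i _; rewrite mulr_sumr; apply: ler_sum => j _.
  rewrite mulrCA; apply: ler_wpM2l => //.
  by rewrite ler_pdivrMl //; exact: (Hw (i, j)).
have Hs : inf [set t | exists2 pi, Gamma_n n pi &
      t = \sum_(i < n) \sum_(j < n) pi i j * ((M i j)^T *m w) 0 0 ^+ 2] <= sup A.
  by apply: sup_upper_bound => //; exists w.
apply: (le_trans _ Hs); apply: (le_trans _ key).
rewrite -(mulrA (4 * (33 / 100) ^+ 3)); apply: ler_piMl; first by rewrite mulr_ge0 // invr_ge0 ltW.
by rewrite -subr_ge0; lra.
Qed.

Unset Implicit Arguments.

Theorem theorem4p7 (R : realType) (d n : nat) (B : set 'rV[R]_d)
  (K : 'rV[R]_d -> 'rV[R]_d -> R) (x y : 'I_n -> 'rV[R]_d) (U : 'M[R]_(n + n)) :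
  (0 < n)%N ->
  kernel_symmetric B K -> kernel_posdef B K ->
  (forall i, B (x i)) -> (forall i, B (y i)) ->
  mx_posdef (Gmx K x y) ->
  cholesky_factor (invmx (Gmx K x y)) U ->
  let eps : R := 4 * (33 / 100) ^+ 3 in
  eps * n%:R ^- 4 * maxF (Mij U K x y) <= maxmin_omega (Mij U K x y) /\
  maxmin_omega (Mij U K x y) <= maxF (Mij U K x y).
Proof.
move=> n0 _ _ _ _ _ _ eps; exact: main_gen.
Qed.
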